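(* Fix an initial cost $\omega \in \mathbb{R}^n$ and consider, for a step size $\alpha>0$, the sequence $(\omega_k)_{k\ge 0}$ defined below (under the stated tie-breaking convention). Then exactly one of the following holds: (i) $B(\omega)$ is non-empty, and there is $\alpha_{\max}>0$ such that for every $\alpha\in(0,\alpha_{\max})$ there exists $n\in\mathbb{N}$ with $y(\omega_n)\in B(\omega)$ and $y(\omega_k)=y(\omega)$ for all $k<n$; (ii) $B(\omega)$ is empty, and for every $\alpha>0$ we have $y(\omega_k)=y(\omega)$ for all $k\in\mathbb{N}$.
   Context: Let $Y\subset\mathbb{R}^n$ be a finite non-empty set. For $\omega\in\mathbb{R}^n$, $y(\omega)$ denotes a chosen element of $\operatorname{argmin}_{y\in Y}\langle \omega,y\rangle$ (the ''solver''). Let $\ell:\mathbb{R}^n\to\mathbb{R}$ be differentiable and write $g(y)=\nabla \ell(y)$. Given $\omega\in\mathbb{R}^n$ and $\alpha>0$, define $\omega_0=\omega$ and $\omega_{k+1}=\omega_k+\alpha\, g(y(\omega_k))$ for $k\ge 0$ (i.e. $\omega_{k+1}=\omega_k-\alpha\Delta_k$ with the ''Identity update'' $\Delta_k=-g(y(\omega_k))$). Tie-breaking convention: for every $k\ge1$, if $y(\omega_{k-1})$ is a minimizer of $\langle \omega_k,\cdot\rangle$ over $Y$, then $y(\omega_k)=y(\omega_{k-1})$. Define the linearized loss at $y(\omega)$ by $f(y')=\ell(y(\omega))+\langle y'-y(\omega),\, g(y(\omega))\rangle$ for $y'\in Y$, and the set of better solutions $B(\omega)=\{y'\in Y: f(y')<f(y(\omega))\}$.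 *)

(* Defs.v *)
From HB Require Import structures.
From mathcomp Require Import all_boot all_order all_algebra.
From mathcomp Require Import all_classical all_reals all_analysis.
Set Implicit Arguments. Unset Strict Implicit. Unset Printing Implicit Defensive.
Import Order.TTheory GRing.Theory Num.Theory.
Import numFieldNormedType.Exports.
Local Open Scope ring_scope.

Definition dotv (R : realType) (n : nat) (u v : 'rV[R]_n) : R :=
  \sum_(i < n) u ord0 i * v ord0 i.

Definition grad (R : realType) (n : nat) (l : 'rV[R]_n -> R) (y : 'rV[R]_n)
  : 'rV[R]_n := \row_(i < n) ('D_(delta_mx 0 i) l y).

Definition is_argmin (R : realType) (n : nat) (Y : seq 'rV[R]_n)
  (w y0 : 'rV[R]_n) : Prop :=
  y0 \in Y /\ forall y', y' \in Y -> dotv w y0 <= dotv w y'.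

(* the cost sequence w_k for step size alpha, driven by the solver outputs
   ysel alpha k = y(w_k): w_0 = w, w_{k+1} = w_k + alpha * g(y(w_k)) *)
Fixpoint omega_seq (R : realType) (n : nat) (l : 'rV[R]_n -> R)
  (ysel : R -> nat -> 'rV[R]_n) (w : 'rV[R]_n) (alpha : R) (k : nat)
  : 'rV[R]_n :=
  match k with
  | 0%N => w
  | k'.+1 => omega_seq l ysel w alpha k' + alpha *: grad l (ysel alpha k')
  end.

Definition lin_loss (R : realType) (n : nat) (l : 'rV[R]_n -> R)
  (y0 y' : 'rV[R]_n) : R :=
  l y0 + dotv (y' - y0) (grad l y0).

(* membership in the set of better solutions B(w), where y0 = y(w) *)
Definition in_better (R : realType) (n : nat) (Y : seq 'rV[R]_n)
  (l : 'rV[R]_n -> R) (y0 y' : 'rV[R]_n) : Prop :=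
  y' \in Y /\ lin_loss l y0 y' < lin_loss l y0 y0.

(* Main.v *)
Require Import Defs.
From HB Require Import structures.
From mathcomp Require Import all_boot all_order all_algebra.
From mathcomp Require Import all_classical all_reals all_analysis.
From mathcomp Require Import ring lra.
Import Order.TTheory GRing.Theory Num.Theory.
Import numFieldNormedType.Exports.
Local Open Scope ring_scope.
Section Dot.
Variables (R : realType) (n : nat).
Implicit Types u v x : 'rV[R]_n.

Lemma dotvC u v : dotv u v = dotv v u.
Proof. by rewrite /dotv; apply: eq_bigr => i _; rewrite mulrC. Qed.

Lemma dotvDl u v x : dotv (u + v) x = dotv u x + dotv v x.
Proof. by rewrite /dotv -big_split; apply: eq_bigr => i _; rewrite mxE mulrDl. Qed.

Lemma dotvZl (a : R) u x : dotv (a *: u) x = a * dotv u x.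
Proof. by rewrite /dotv mulr_sumr; apply: eq_bigr => i _; rewrite mxE mulrA. Qed.

Lemma dotvNl u x : dotv (- u) x = - dotv u x.
Proof. by rewrite -scaleN1r dotvZl mulN1r. Qed.

Lemma lin_lossE (l : 'rV[R]_n -> R) y0 y' :
  (lin_loss l y0 y' < lin_loss l y0 y0) = (dotv (grad l y0) y' < dotv (grad l y0) y0).
Proof.
rewrite /lin_loss subrr -(scale0r 0) dotvZl mul0r addr0 gtrDl dotvDl dotvNl.
by rewrite (dotvC y') (dotvC y0) subr_lt0.
Qed.
End Dot.

Lemma omega_const (R : realType) (n : nat) (l : 'rV[R]_n -> R)
  (ysel : R -> nat -> 'rV[R]_n) (w y0 : 'rV[R]_n) (alpha : R) (k : nat) :
  (forall j, (j < k)%N -> ysel alpha j = y0) ->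
  omega_seq l ysel w alpha k = w + (k%:R * alpha) *: grad l y0.
Proof.
elim: k => [|k IH] H /=; first by rewrite mul0r scale0r addr0.
rewrite IH; last by move=> j Hj; apply: H; apply: ltnW.
by rewrite H // -addrA -scalerDl -{2}(mul1r alpha) -mulrDl -natr1 addrC.
Qed.

Theorem theorem1 (R : realType) (n : nat) (Y : seq 'rV[R]_n)
  (l : 'rV[R]_n -> R) (w y0 : 'rV[R]_n) (ysel : R -> nat -> 'rV[R]_n) :
  Y != [::] ->
  (forall y : 'rV[R]_n, differentiable l y) ->
  is_argmin Y w y0 ->
  (forall alpha : R, 0 < alpha -> ysel alpha 0%N = y0) ->
  (forall (alpha : R) (k : nat), 0 < alpha ->
     is_argmin Y (omega_seq l ysel w alpha k) (ysel alpha k)) ->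
  (forall (alpha : R) (k : nat), 0 < alpha ->
     is_argmin Y (omega_seq l ysel w alpha k.+1) (ysel alpha k) ->
     ysel alpha k.+1 = ysel alpha k) ->
  let P1 :=
    (exists y', in_better Y l y0 y') /\
    (exists amax : R, 0 < amax /\
       forall alpha : R, 0 < alpha -> alpha < amax ->
         exists m : nat, in_better Y l y0 (ysel alpha m) /\
           forall k : nat, (k < m)%N -> ysel alpha k = y0) in
  let P2 :=
    (~ exists y', in_better Y l y0 y') /\
    (forall alpha : R, 0 < alpha -> forall k : nat, ysel alpha k = y0) in
  (P1 /\ ~ P2) \/ (P2 /\ ~ P1).
Proof.
move=> _ _ Hw H0 Harg Htie P1 P2.
set g := grad l y0.
have [HB|HB] := pselect (exists y', in_better Y l y0 y'); last first.
  right; split; last by rewrite /P1 => -[].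
  split => // alpha Ha.
  elim => [|k IH]; first exact: H0.
  rewrite Htie // IH; split; first by have [] := Harg alpha k Ha; rewrite IH.
  move=> y' Hy'.
  have [_ Hk] := Harg alpha k Ha; rewrite IH in Hk.
  rewrite /= IH !dotvDl !dotvZl lerD // ?Hk // ler_pM2l //.
  rewrite leNgt; apply/negP => Hlt; apply: HB; exists y'; split => //.
  by rewrite lin_lossE.
left; split; last by rewrite /P2 => -[].
split => //; exists 1; split => // alpha Ha _.
have Hex : exists m, ysel alpha m != y0.
  apply: contrapT => Hno.
  have Hall : forall m, ysel alpha m = y0.
    by move=> m; apply/eqP/negPn/negP => Hne; apply: Hno; exists m.
  case: HB => y' [Hy' Hlt]; rewrite lin_lossE -/g in Hlt.
  set e := alpha * (dotv g y0 - dotv g y').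
  have He : 0 < e by rewrite mulr_gt0 // subr_gt0.
  set M := dotv w y' - dotv w y0.
  have Hk : forall k : nat, k%:R * e <= M.
    move=> k; have [_ Hk] := Harg alpha k Ha.
    move: (Hk y' Hy'); rewrite Hall (@omega_const _ _ l ysel w y0); last by move=> j _; apply: Hall.
    rewrite !dotvDl !dotvZl /e /M => H; nra.
  have Hb := archi_boundP (normr_ge0 (M / e)).
  have := Hk (Num.bound `|M / e|).
  have : M / e < (Num.bound `|M / e|)%:R by apply: le_lt_trans Hb; apply: ler_norm.
  by rewrite ltr_pdivrMr // => H1 H2; move: (lt_le_trans H1 H2); rewrite ltxx.
case: (ex_minnP Hex) => m Hm Hmin.
have Hlt : forall k, (k < m)%N -> ysel alpha k = y0.
  move=> k Hk; apply/eqP; apply: contraTT Hk => Hne; rewrite -leqNgt; exact: Hmin.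
exists m; split => //.
case: m Hm Hmin Hlt => [|m] Hm _ Hlt; first by rewrite H0 ?eqxx in Hm.
have Hym := Hlt m (ltnSn m).
have [Hin Hmm] := Harg alpha m.+1 Ha.
split => //; rewrite lin_lossE -/g.
have Hnot : ~ is_argmin Y (omega_seq l ysel w alpha m.+1) y0.
  by move=> Ha'; move/eqP: Hm; apply; rewrite Htie // Hym.
have [y'' [Hy'' Hlt'']] : exists y'', y'' \in Y /\
    dotv (omega_seq l ysel w alpha m.+1) y'' < dotv (omega_seq l ysel w alpha m.+1) y0.
  apply: contra_notP Hnot => Hno; split; first by case: (Harg alpha 0%N Ha); rewrite H0.
  move=> y' Hy'; rewrite leNgt; apply/negP => Hl; apply: Hno; exists y'; split.
    exact: Hy'.
  exact: Hl.
have [_ Hm'] := Harg alpha m Ha; rewrite Hym in Hm'.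
have H1 := Hm' _ Hin.
have H2 := le_lt_trans (Hmm _ Hy'') Hlt''.
move: H2; rewrite /= Hym !dotvDl !dotvZl -/g => H2.
have : alpha * dotv g (ysel alpha m.+1) < alpha * dotv g y0 by lra.
by rewrite ltr_pM2l.
Qed.
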